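(* Let $N\ge0$ be an even integer and let $a=(a_0,a_1,\dots,a_N)\in\mathbb N^{N+1}$ satisfy $a_0\le a_1\le\dots\le a_N$, $a_0<a_2<a_4<\cdots$ and $a_1<a_3<a_5<\cdots$. Let $\mathcal J=\{i\in[0,N]: a_i$ appears exactly once in the sequence $a\}$; then $\mathcal J=\{i_0<i_1<\dots<i_{2M}\}$ for some $M\in\mathbb N$ with $i_s\equiv s\pmod 2$, and $i_{s+1}=i_s+2m_s+1$ with $m_s\in\mathbb N$ for $s\in[0,2M-1]$. Let $\mathcal E$ be the set of $b=(b_0,\dots,b_N)\in\mathbb N^{N+1}$ with $b_0<b_2<b_4<\cdots$, $b_1<b_3<b_5<\cdots$ and such that the multisets $\{b_0,\dots,b_N\}$ and $\{a_0,\dots,a_N\}$ coincide. For $b\in\mathcal E$ let $\hat b=(b_0,b_1+1,b_2+1,b_3+2,b_4+2,\dots,b_{N-1}+N/2,b_N+N/2)$, i.e. $\hat b_i=b_i+\lceil i/2\rceil$. For $X\subset\{1,3,\dots,2M-1\}$ define $a^X\in\mathcal E$ by: for $s\in X$, $(a^X_{i_s},a^X_{i_s+1},a^X_{i_s+2},a^X_{i_s+3},\dots,a^X_{i_s+2m_s},a^X_{i_s+2m_s+1})=(a_{i_s+1},a_{i_s},a_{i_s+3},a_{i_s+2},\dots,a_{i_s+2m_s+1},a_{i_s+2m_s})$, and $a^X_i=a_i$ for all other $i\in[0,N]$. If $b\in\mathcal E$ is such that the multiset $\{\hat b_0,\dots,\hat b_N\}$ equals the multiset $\{\hat a_0,\dots,\hat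 a_N\}$, then there exists $X\subset\{1,3,\dots,2M-1\}$ with $b=a^X$. *)

(* Defs.v *)
From mathcomp Require Export all_boot.
Set Implicit Arguments. Unset Strict Implicit. Unset Printing Implicit Defensive.

Definition step2_incr (s : seq nat) : Prop :=
  forall i, i.+2 < size s -> nth 0 s i < nth 0 s i.+2.

Definition Jseq (a : seq nat) : seq nat :=
  [seq i <- iota 0 (size a) | count_mem (nth 0 a i) a == 1].

Definition hat (b : seq nat) : seq nat :=
  [seq nth 0 b i + uphalf i | i <- iota 0 (size b)].

Definition in_block (J : seq nat) (i s : nat) : bool :=
  (nth 0 J s <= i) && (i <= nth 0 J s.+1).

(* a^X : for s in X, swap the pairs (i_s + 2k, i_s + 2k + 1), k = 0..m_s;
   other entries unchanged. *)
Definition aX (a : seq nat) (X : seq nat) : seq nat :=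
  let J := Jseq a in
  [seq (let s := nth 0 X (find (in_block J i) X) in
        if has (in_block J i) X then
          (if ~~ odd (i - nth 0 J s) then nth 0 a i.+1 else nth 0 a i.-1)
        else nth 0 a i)
  | i <- iota 0 (size a)].

(* Main.v *)
Require Import Defs.
From mathcomp Require Import all_boot zify.

Lemma hat_cat2 (s : seq nat) x y :
  hat (s ++ [:: x; y]) = hat s ++ [:: x + uphalf (size s); y + uphalf (size s).+1].
Proof.
rewrite /hat size_cat /= -addn2 iotaD map_cat add0n /=.
congr (_ ++ _). idtac.
  apply/eq_in_map => i; rewrite mem_iota add0n /= => Hi.
  by rewrite nth_cat Hi.
by rewrite !nth_cat ltnn subnn ltnNge leqnSn /= subSnn.
Qed.

Lemma step2_prefix (s t : seq nat) : step2_incr (s ++ t) -> step2_incr s.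
Proof.
move=> H i Hi; have := H i; rewrite size_cat !nth_cat Hi.
have -> : i < size s by lia.
by apply; lia.
Qed.

Lemma sorted_nth_le (s : seq nat) i j :
  sorted leq s -> i <= j -> j < size s -> nth 0 s i <= nth 0 s j.
Proof.
move=> Hs Hij Hj.
apply: (sorted_leq_nth leq_trans leqnn 0 Hs) => //.
by rewrite inE (leq_ltn_trans Hij Hj).
Qed.

Lemma perm2 (u v x y : nat) : perm_eq [:: u; v] [:: x; y] ->
  (u = x /\ v = y) \/ (u = y /\ v = x).
Proof.
move=> H.
have : x \in [:: u; v] by rewrite (perm_mem H) mem_head.
rewrite !inE => /orP [/eqP E|/eqP E]; subst x.
  left; split => //.
  have : perm_eq [:: v] [:: y] by rewrite -(perm_cons u).
  by move/perm_mem => /(_ y); rewrite !inE eqxx => /eqP.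
right; split => //.
have H2 : perm_eq [:: v; u] [:: v; y].
  by apply: perm_trans H; rewrite (perm_catC [:: v] [:: u]).
have : perm_eq [:: u] [:: y] by rewrite -(perm_cons v).
by move/perm_mem => /(_ y); rewrite !inE eqxx => /eqP.
Qed.

Lemma filter_nil_all (P : pred nat) (s : seq nat) :
  (forall z, z \in s -> ~~ P z) -> filter P s = [::].
Proof.
move=> H; apply/eqP; rewrite -[_ == _]negbK -has_filter; apply/hasPn => z Hz.
exact: H.
Qed.

Lemma mem_hat (s : seq nat) z : z \in hat s ->
  exists2 j, j < size s & z = nth 0 s j + uphalf j.
Proof.
by rewrite /hat => /mapP [j]; rewrite mem_iota add0n /= => Hj ->; exists j.
Qed.

Definition pairP (a b : seq nat) k :=
  (nth 0 b k.*2.+1 = nth 0 a k.*2.+1 /\ nth 0 b k.*2.+2 = nth 0 a k.*2.+2) \/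
  (nth 0 b k.*2.+1 = nth 0 a k.*2.+2 /\ nth 0 b k.*2.+2 = nth 0 a k.*2.+1).

Lemma pairs m : forall a b, size a = m.*2.+1 -> size b = m.*2.+1 ->
  sorted leq a -> step2_incr b -> perm_eq b a -> perm_eq (hat b) (hat a) ->
  nth 0 b 0 = nth 0 a 0 /\ forall k, k < m -> pairP a b k.
Proof.
elim: m => [|m IH] a b.
  case: a => [|a0 [|? ?]] //; case: b => [|b0 [|? ?]] // _ _ _ _ Hp _.
  have : b0 \in [:: a0] by rewrite -(perm_mem Hp) mem_head.
  by rewrite inE => /eqP ->; split.
case/lastP: a => [|a1 y] //; case/lastP: a1 => [|a' x].
  by rewrite /= doubleS.
case/lastP: b => [|b1 v] //; case/lastP: b1 => [|b' u].
  by rewrite /= doubleS.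
rewrite -!cats1 -!catA /= !size_cat /= !addn2 doubleS.
move=> [Ha] [Hb] Hs Hst Hp Hh.
have HA j : j < size a' -> nth 0 (a' ++ [:: x; y]) j <= x.
  move=> Hj.
  apply: leq_trans (@sorted_nth_le _ j (size a') Hs (ltnW Hj) _) _.
    by rewrite size_cat /= addn2 ltnS leqnSn.
  by rewrite nth_cat ltnn subnn.
have Hy z : z \in a' ++ [:: x; y] -> z <= y.
  move=> Hz; rewrite -(nth_index 0 Hz).
  have Hi : index z (a' ++ [:: x; y]) < (size a').+2.
    by move: Hz; rewrite -index_mem size_cat /= addn2.
  apply: leq_trans (@sorted_nth_le _ _ (size a').+1 Hs _ _) _.
  - by rewrite -ltnS.
  - by rewrite size_cat /= addn2.
  by rewrite nth_cat ltnNge leqnSn /= subSnn.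
have HB j : j < size b' -> nth 0 (b' ++ [:: u; v]) j <= x.
  move=> Hj.
  have H1 : nth 0 (b' ++ [:: u; v]) j < y.
    apply: (leq_trans (Hst j _)); first by rewrite size_cat /= addn2 ltnS.
    apply: Hy; rewrite -(perm_mem Hp); apply: mem_nth.
    by rewrite size_cat /= addn2 ltnS.
  have : nth 0 (b' ++ [:: u; v]) j \in a' ++ [:: x; y].
    by rewrite -(perm_mem Hp); apply: mem_nth; rewrite size_cat ltn_addr.
  move=> Hz; move: (Hz); rewrite -(nth_index 0 Hz).
  have : index (nth 0 (b' ++ [:: u; v]) j) (a' ++ [:: x; y]) < size a' + 2.
    by move: Hz; rewrite -index_mem size_cat.
  set i := index _ _ => Hi _.
  have [Hi1|Hi1] := ltnP i (size a').
    exact: HA.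
  have [Hi2|Hi2] : i = size a' \/ i = (size a').+1 by lia.
    by rewrite Hi2 nth_cat ltnn subnn.
  have := nth_index 0 Hz; rewrite -/i Hi2 (nth_cat 0 a') (_ : (size a').+1 < size a' = false) ?subSnn /=; last by lia.
  move=> E.
  by move: H1; rewrite -E ltnn.
move: Hh; rewrite !hat_cat2 Ha Hb => Hh.
have Hupm j : j < m.*2.+1 -> uphalf j <= m by move=> Hj; rewrite leq_uphalf_double.
set P := fun z => x + m.+1 <= z.
have Hf := perm_filter P Hh.
rewrite !filter_cat in Hf.
rewrite (@filter_nil_all P (hat b')) in Hf; last first.
  move=> z /mem_hat [j Hj ->]; rewrite /P -ltnNge.
  have := HB j Hj; rewrite nth_cat Hj => H1.
  have := Hupm j; rewrite -Hb => /(_ Hj) H2; lia.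
rewrite (@filter_nil_all P (hat a')) in Hf; last first.
  move=> z /mem_hat [j Hj ->]; rewrite /P -ltnNge.
  have := HA j Hj; rewrite nth_cat Hj => H1.
  have := Hupm j; rewrite -Ha => /(_ Hj) H2; lia.
have Hxy : x <= y by apply: Hy; rewrite mem_cat !inE eqxx orbT.
have Hx2 : uphalf (m.*2.+1) = m.+1 by rewrite /= doubleK.
have Hx3 : uphalf (m.*2.+2) = m.+1 by rewrite -doubleS uphalf_double.
have Hxx : [seq z <- [:: x + m.+1; y + m.+1] | P z] = [:: x + m.+1; y + m.+1].
  by rewrite /= /P leqnn leq_add2r Hxy.
rewrite Hx2 Hx3 Hxx /= in Hf.
have Huv : P (u + m.+1) && P (v + m.+1).
  move: (perm_size Hf) => /=.
  by case: (P (u + m.+1)); case: (P (v + m.+1)).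
move/andP: Huv => [Pu Pv]; rewrite Pu Pv in Hf.
have Huv : (u = x /\ v = y) \/ (u = y /\ v = x).
  by case: (@perm2 _ _ _ _ Hf) => [[/addIn -> /addIn ->]|[/addIn -> /addIn ->]]; [left|right].
have Hp' : perm_eq b' a'.
  rewrite -(perm_cat2r [:: x; y]); apply: perm_trans Hp.
  case: Huv => [[-> ->]|[-> ->]] //.
  by rewrite perm_cat2l (perm_catC [:: x] [:: y]).
have Hh' : perm_eq (hat b') (hat a').
  rewrite Hx2 Hx3 in Hh.
  rewrite -(perm_cat2r [:: x + m.+1; y + m.+1]); apply: perm_trans _ Hh.
  case: Huv => [[-> ->]|[-> ->]] //.
  by rewrite perm_cat2l (perm_catC [:: _] [:: _]).
have [IH1 IH2] := IH a' b' Ha Hb (cat_sorted2 Hs).1 (@step2_prefix _ _ Hst) Hp' Hh'.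
split.
  by rewrite !nth_cat Ha Hb /=.
move=> k; rewrite ltnS leq_eqVlt => /orP [/eqP ->|Hk].
  rewrite /pairP !nth_cat Ha Hb ltnn ltnNge leqnSn /= subnn subSnn /=.
  by case: Huv => [[-> ->]|[-> ->]]; [left|right].
have Hk1 : k.*2.+2 < m.*2.+1 by rewrite ltnS -doubleS leq_double.
have Hk2 : k.*2.+1 < m.*2.+1 by apply: ltn_trans Hk1.
rewrite /pairP !nth_cat Ha Hb Hk1 Hk2.
exact: IH2.
Qed.

Set Implicit Arguments. Unset Strict Implicit.

Definition ee (a : seq nat) p := (0 < p) && (p < size a) && (nth 0 a p.-1 == nth 0 a p).
Definition single (a : seq nat) q := count_mem (nth 0 a q) a == 1.
Definition cnt (a : seq nat) p := count (single a) (iota 0 p).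

Lemma lt2 (a : seq nat) p q : sorted leq a -> step2_incr a ->
  p.+1 < q -> q < size a -> nth 0 a p < nth 0 a q.
Proof.
move=> Hs Hst Hpq Hq.
apply: (leq_trans (Hst p _)); first by lia.
apply: sorted_nth_le => //.
Qed.

Lemma count_iota_split (P : pred nat) n q : q < n ->
  count P (iota 0 n) = count P (iota 0 q) + P q + count P (iota q.+1 (n - q.+1)).
Proof.
move=> Hq; have E : n = q + (n - q.+1).+1 by lia.
by rewrite {1}E iotaD add0n count_cat /= addnA.
Qed.

Lemma count0 (P : pred nat) s : (forall x, x \in s -> ~~ P x) -> count P s = 0.
Proof.
move=> H; apply/eqP; rewrite -leqn0 leqNgt -has_count; apply/hasPn => x Hx.
exact: H.
Qed.

Lemma count_low (P : pred nat) q : (forall p, p.+1 < q -> ~~ P p) ->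
  count P (iota 0 q) = (0 < q) && P q.-1.
Proof.
case: q => [//|q] H.
rewrite -addn1 iotaD count_cat add0n /= addn0 count0 ?addn1 //.
by move=> x; rewrite mem_iota add0n => Hx; apply: H; lia.
Qed.

Lemma count_high (P : pred nat) q k :
  (forall p, q.+1 < p -> p < q.+1 + k -> ~~ P p) ->
  count P (iota q.+1 k) = (0 < k) && P q.+1.
Proof.
case: k => [//|k] H.
rewrite /= count0 ?addn0 //.
by move=> x; rewrite mem_iota => Hx; apply: H; lia.
Qed.

Lemma single_iff (a : seq nat) q : sorted leq a -> step2_incr a -> q < size a ->
  single a q = ~~ ee a q && ~~ ee a q.+1.
Proof.
move=> Hs Hst Hq.
rewrite /single.
have -> : count_mem (nth 0 a q) a =
    count (fun p => nth 0 a p == nth 0 a q) (iota 0 (size a)).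
  by rewrite -[X in count _ X](mkseq_nth 0 a) /mkseq count_map.
rewrite /single.
rewrite (@count_iota_split _ _ _ Hq) /= eqxx.
rewrite count_low; last first.
  move=> p Hp /=; by rewrite eq_sym neq_ltn (lt2 Hs Hst Hp) ?orbT.
rewrite count_high; last first.
  move=> p Hp Hpa /=.
  by rewrite neq_ltn (lt2 Hs Hst Hp) ?orbT //; lia.
rewrite /ee Hq /= subn_gt0 andbT [nth 0 a q.+1 == _]eq_sym.
by case: ((0 < q) && _); case: ((q.+1 < size a) && _).
Qed.

Lemma ee_excl (a : seq nat) p : sorted leq a -> step2_incr a -> ~~ (ee a p && ee a p.+1).
Proof.
move=> Hs Hst; apply/negP; rewrite /ee => /andP [/andP [/andP [H0 H1] /eqP E1]
  /andP [/andP [_ H2] /eqP E2]].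
have H3 : p.-1.+1 < p.+1 by lia.
by have := @lt2 a p.-1 p.+1 Hs Hst H3 H2; rewrite E1 E2 ltnn.
Qed.

Lemma cntS (a : seq nat) p : cnt a p.+1 = cnt a p + single a p.
Proof. by rewrite /cnt -addn1 iotaD count_cat /= addn0. Qed.

Lemma cnt_par (a : seq nat) p : sorted leq a -> step2_incr a -> p <= size a ->
  odd (cnt a p) = odd p (+) ee a p.
Proof.
move=> Hs Hst; elim: p => [|p IH] Hp; first by rewrite /cnt /ee.
rewrite cntS oddD IH ?(ltnW Hp) // (single_iff Hs Hst Hp).
have := ee_excl p Hs Hst.
by rewrite [odd p.+1]/=; case: (ee a p); case: (ee a p.+1); case: (odd p).
Qed.

Lemma cnt_mono (a : seq nat) p q : p <= q -> cnt a p <= cnt a q.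
Proof.
move=> Hpq; rewrite /cnt -(subnKC Hpq) iotaD count_cat; exact: leq_addr.
Qed.

Lemma Jsize (a : seq nat) : size (Jseq a) = cnt a (size a).
Proof. by rewrite /Jseq size_filter. Qed.

Lemma J_at (a : seq nat) q : q < size a -> single a q ->
  cnt a q < size (Jseq a) /\ nth 0 (Jseq a) (cnt a q) = q.
Proof.
move=> Hq Sq.
have E : Jseq a = filter (single a) (iota 0 q) ++ q :: filter (single a) (iota q.+1 (size a - q.+1)).
  rewrite /Jseq.
  have E : size a = q + (size a - q.+1).+1 by lia.
  by rewrite {1}E iotaD filter_cat add0n /= -/(single a q) Sq.
rewrite E size_cat /= nth_cat size_filter -/(cnt a q) ltnn subnn /=; split => //.
lia.
Qed.

Lemma J_nth (a : seq nat) s : s < size (Jseq a) ->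
  [/\ single a (nth 0 (Jseq a) s), nth 0 (Jseq a) s < size a &
      cnt a (nth 0 (Jseq a) s) = s].
Proof.
move=> Hs.
have Hm : nth 0 (Jseq a) s \in Jseq a by apply: mem_nth.
move: (Hm); rewrite /Jseq mem_filter mem_iota add0n /= => /andP [Sq Hq].
split => //.
have [H1 H2] := J_at Hq Sq.
apply/eqP; rewrite -(nth_uniq 0 H1 Hs); first by rewrite H2.
by rewrite /Jseq filter_uniq // iota_uniq.
Qed.

Definition Ctx m (a b : seq nat) :=
  [/\ size a = m.*2.+1, size b = m.*2.+1, sorted leq a, step2_incr a &
   [/\ step2_incr b, nth 0 b 0 = nth 0 a 0 & forall k, k < m -> pairP a b k]].

Definition sw (a b : seq nat) k := nth 0 b k.*2.+1 != nth 0 a k.*2.+1.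

Lemma sw_yes m a b k : Ctx m a b -> k < m -> sw a b k ->
  [/\ nth 0 b k.*2.+1 = nth 0 a k.*2.+2, nth 0 b k.*2.+2 = nth 0 a k.*2.+1
    & ~~ ee a k.*2.+2].
Proof.
case=> Ha Hb Hs Hst [Hbst H0 Hp] Hk; rewrite /sw.
case: (Hp k Hk) => [[-> _]|[E1 E2]]; first by rewrite eqxx.
rewrite E1 E2 => Hne; split => //.
rewrite /ee; apply/negP => /andP [_ /eqP E].
by move: Hne; rewrite E eqxx.
Qed.

Lemma sw_no m a b k : Ctx m a b -> k < m -> ~~ sw a b k ->
  nth 0 b k.*2.+1 = nth 0 a k.*2.+1 /\ nth 0 b k.*2.+2 = nth 0 a k.*2.+2.
Proof.
case=> Ha Hb Hs Hst [Hbst H0 Hp] Hk; rewrite /sw negbK => /eqP E.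
case: (Hp k Hk) => [//|[E1 E2]].
by rewrite E E2 -E1 E.
Qed.

Lemma C0 m a b : Ctx m a b -> 0 < m -> sw a b 0 -> ~~ ee a 1.
Proof.
move=> H Hm Hsw; have [E1 E2 _] := sw_yes H Hm Hsw.
case: H => Ha Hb Hs Hst [Hbst H0 Hp].
have H2 : 2 < m.*2.+1 by lia.
have := Hbst 0; rewrite Hb H0 /= E2 => /(_ H2) Hlt.
by rewrite /ee /= (ltn_eqF Hlt) andbF.
Qed.

Lemma C1 m a b k : Ctx m a b -> k.+1 < m -> ee a k.*2.+3 -> sw a b k = sw a b k.+1.
Proof.
move=> H Hk He.
have Hk0 : k < m by apply: ltnW.
move: He; rewrite /ee => /andP [_ /eqP E] /=.
case: (boolP (sw a b k)) => S1; case: (boolP (sw a b k.+1)) => S2 //.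
- have [E1 _ _] := sw_yes H Hk0 S1.
  have [E3 _] := sw_no H Hk S2.
  case: H => Ha Hb Hs Hst [Hbst H0 Hp].
  rewrite doubleS in E3.
  have H3 : k.*2.+3 < m.*2.+1 by lia.
  by have := Hbst k.*2.+1 ; rewrite Hb E1 E3 -E ltnn => /(_ H3).
- have [_ E4 _] := sw_yes H Hk S2.
  have [_ E3] := sw_no H Hk0 S1.
  case: H => Ha Hb Hs Hst [Hbst H0 Hp].
  rewrite doubleS in E4.
  have H3 : k.*2.+4 < m.*2.+1 by lia.
  by have := Hbst k.*2.+2 ; rewrite Hb E3 E4 -E ltnn => /(_ H3).
Qed.

Lemma down m a b k : Ctx m a b -> k < m -> sw a b k ->
  exists j, [/\ j <= k, sw a b j, single a j.*2.+1 &
    forall t, j <= t -> t < k -> ee a t.*2.+3].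
Proof.
move=> H; have [Ha _ Hs Hst _] := H.
elim: k => [|k IH] Hk Hsw.
  exists 0; split; [by [] | by [] | | by move=> t; lia].
  rewrite (single_iff Hs Hst); last by rewrite Ha; lia.
  by rewrite (C0 H Hk Hsw) /=; have [_ _ ->] := sw_yes H Hk Hsw.
case: (boolP (ee a k.*2.+3)) => He.
  have Hk0 : k < m by lia.
  rewrite -(C1 H Hk He) in Hsw.
  have [j [Hj Sj Sgj Ht]] := IH Hk0 Hsw.
  exists j; split => //; first by lia.
  move=> t Ht1 Ht2; case: (ltnP t k) => Htk; first exact: Ht.
  by have -> : t = k by lia.
exists k.+1; split; [by [] | by [] | | by move=> t; lia].
rewrite (single_iff Hs Hst); last by rewrite Ha; lia.
have [_ _ He2] := sw_yes H Hk Hsw.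
by rewrite doubleS He /=; move: He2; rewrite doubleS.
Qed.

Lemma up m a b d : forall k, Ctx m a b -> k + d = m.-1 -> k < m -> sw a b k ->
  exists l, [/\ k <= l, l < m, single a l.*2.+2 &
    forall t, k <= t -> t < l -> ee a t.*2.+3].
Proof.
elim: d => [|d IH] k H; have [Ha _ Hs Hst _] := H => Hkd Hk Hsw.
  exists k; split; [by [] | by [] | | by move=> t; lia].
  rewrite (single_iff Hs Hst); last by rewrite Ha; lia.
  have [_ _ ->] := sw_yes H Hk Hsw.
  by rewrite /ee Ha (_ : k.*2.+3 < m.*2.+1 = false) ?andbF //; lia.
have Hk1 : k.+1 < m by lia.
case: (boolP (ee a k.*2.+3)) => He.
  rewrite (C1 H Hk1 He) in Hsw.
  have [l [Hl1 Hl2 Sl Ht]] := IH k.+1 H ltac:(lia) Hk1 Hsw.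
  exists l; split => //; first by lia.
  move=> t Ht1 Ht2; case: (ltnP k t) => Htk; first exact: Ht.
  by have -> : t = k by lia.
exists k; split; [by [] | by [] | | by move=> t; lia].
rewrite (single_iff Hs Hst); last by rewrite Ha; lia.
by have [_ _ ->] := sw_yes H Hk Hsw.
Qed.

Lemma block_sw m a b p q : Ctx m a b -> q < size a ->
  (forall r, p < r -> r < q -> ~~ single a r) -> sw a b p./2 -> odd p ->
  forall k, p <= k.*2.+1 -> k.*2.+2 <= q -> sw a b k.
Proof.
move=> H Hq Hns Hsw Op; have [Ha _ Hs Hst _] := H.
have Ep := odd_double_half p; rewrite Op in Ep.
elim=> [|k IH] Hpk Hkq.
  have E0 : p./2 = 0 by lia.
  by rewrite E0 in Hsw.
case: (ltnP (k.*2.+1) p) => Hk.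
  have E0 : k.+1 = p./2 by rewrite doubleS in Hpk; lia.
  by rewrite E0.
have Sk := IH Hk ltac:(rewrite doubleS in Hkq; lia).
have Hkm : k < m by rewrite doubleS in Hkq; lia.
have Hkm1 : k.+1 < m by rewrite doubleS in Hkq; lia.
rewrite -(C1 H Hkm1) //.
have := Hns k.*2.+2 ltac:(lia) ltac:(rewrite doubleS in Hkq; lia).
rewrite (single_iff Hs Hst); last by rewrite Ha; lia.
by have [_ _ ->] := sw_yes H Hkm Sk; rewrite /= negbK.
Qed.

Lemma nosingle_between a p q s : cnt a p = s -> cnt a q = s.+1 -> single a p ->
  forall r, p < r -> r < q -> ~~ single a r.
Proof.
move=> Cp Cq Sp r Hpr Hrq; apply/negP => Sr.
have H1 := @cnt_mono a r.+1 q Hrq.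
have H2 := @cnt_mono a p.+1 r Hpr.
move: H1 H2; rewrite !cntS Cp Cq Sp Sr /=; lia.
Qed.

Lemma in_block_val m a b s i : Ctx m a b -> s.+1 < size (Jseq a) -> odd s ->
  nth 0 b (nth 0 (Jseq a) s) != nth 0 a (nth 0 (Jseq a) s) ->
  in_block (Jseq a) i s ->
  nth 0 b i = if ~~ odd (i - nth 0 (Jseq a) s) then nth 0 a i.+1 else nth 0 a i.-1.
Proof.
move=> H Hs1 Os Hne; have [Ha _ Hs Hst _] := H.
have [Sp Hp Cp] := J_nth (ltnW Hs1).
have [Sq Hq Cq] := J_nth Hs1.
rewrite /in_block.
move: Sp Hp Cp Sq Hq Cq Hne.
set p := nth 0 (Jseq a) s; set q := nth 0 (Jseq a) s.+1.
move=> Sp Hp Cp Sq Hq Cq Hne /andP [Hpi Hiq].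
have Hpq : p < q.
  rewrite ltnNge; apply/negP => /(@cnt_mono a) Hc; move: Hc; rewrite Cp Cq; lia.
have Hns := nosingle_between Cp Cq Sp.
have Op : odd p.
  have := cnt_par Hs Hst (ltnW Hp); rewrite Cp Os.
  move: Sp; rewrite (single_iff Hs Hst Hp) => /andP [/negbTE -> _].
  by rewrite addbF.
have Oq : ~~ odd q.
  have := cnt_par Hs Hst (ltnW Hq); rewrite Cq /= Os.
  move: Sq; rewrite (single_iff Hs Hst Hq) => /andP [/negbTE -> _].
  by rewrite addbF => <-.
have Ep := odd_double_half p; rewrite Op in Ep.
have Eq := odd_double_half q; rewrite (negbTE Oq) in Eq.
have Hsw : sw a b p./2.
  by rewrite /sw (_ : (p./2).*2.+1 = p) //; lia.
have Bsw := block_sw H Hq Hns Hsw Op.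
have Ei := odd_double_half i.
rewrite oddB // Op addbT negbK.
case: (boolP (odd i)) => Oi; [rewrite Oi in Ei * | rewrite (negbTE Oi) in Ei *].
  have Hk1 : p <= (i./2).*2.+1 by lia.
  have Hk2 : (i./2).*2.+2 <= q by lia.
  have Hkm : i./2 < m by lia.
  have [E1 _ _] := sw_yes H Hkm (Bsw _ Hk1 Hk2).
  by rewrite (_ : i = (i./2).*2.+1) //; lia.
have Hk1 : p <= (i./2).-1.*2.+1 by lia.
have Hk2 : (i./2).-1.*2.+2 <= q by lia.
have Hkm : (i./2).-1 < m by lia.
have [_ E2 _] := sw_yes H Hkm (Bsw _ Hk1 Hk2).
have -> : i = (i./2).-1.*2.+2 by lia.
by rewrite E2.
Qed.

Definition Xof (a b : seq nat) :=
  [seq s <- iota 0 (size (Jseq a)) | odd s && (s.+1 < size (Jseq a)) &&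
     (nth 0 b (nth 0 (Jseq a) s) != nth 0 a (nth 0 (Jseq a) s))].

Lemma outside m a b i : Ctx m a b -> i < size a ->
  ~~ has (in_block (Jseq a) i) (Xof a b) -> nth 0 b i = nth 0 a i.
Proof.
move=> H Hi Hhas; have [Ha _ Hs Hst [_ H0 _]] := H.
case: i Hi Hhas => [|i] Hi Hhas; first exact: H0.
have Ei := odd_double_half i.
set k := i./2 in Ei.
have Hk : k < m by lia.
case: (boolP (sw a b k)) => Hsw; last first.
  have [E1 E2] := sw_no H Hk Hsw.
  case: (boolP (odd i)) => Oi; [rewrite Oi in Ei | rewrite (negbTE Oi) in Ei].
    by have -> : i.+1 = k.*2.+2 by lia.
  by have -> : i.+1 = k.*2.+1 by lia.
exfalso; move/negP: Hhas; apply.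
have [j [Hjk Sj Sgj Htj]] := down H Hk Hsw.
have [l [Hkl Hlm Sgl Htl]] := @up m a b (m.-1 - k) k H ltac:(lia) Hk Hsw.
set p := j.*2.+1; set q := l.*2.+2.
have Hp : p < size a by rewrite Ha /p; lia.
have Hq : q < size a by rewrite Ha /q; lia.
have Hns : forall r, p < r -> r < q -> ~~ single a r.
  have Ht : forall t, j <= t -> t < l -> ee a t.*2.+3.
    move=> t H1 H2; case: (ltnP t k) => H3; [exact: Htj | exact: Htl].
  move=> r Hpr Hrq; rewrite /p /q in Hpr Hrq.
  have Er := odd_double_half r.
  have Hr : r < size a by lia.
  rewrite (single_iff Hs Hst Hr).
  case: (boolP (odd r)) => Or; [rewrite Or in Er | rewrite (negbTE Or) in Er].
    have Et : r = (r./2).-1.*2.+3 by lia.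
    by rewrite {1}Et Ht //=; lia.
  have Et : r.+1 = (r./2).-1.*2.+3 by lia.
  by rewrite Et Ht ?andbF //=; lia.
have Cq : cnt a q = (cnt a p).+1.
  have Eq : q = p.+1 + (q - p.+1) by rewrite /p /q; lia.
  rewrite /cnt Eq iotaD count_cat add0n -/(cnt a p.+1) cntS Sgj count0 ?addn0 ?addn1 //.
  move=> x; rewrite mem_iota => /andP [Hx1 Hx2]; apply: Hns; lia.
set s := cnt a p.
have [Hs1 Js] := J_at Hp Sgj.
have [Hs2 Js1] := J_at Hq Sgl.
rewrite Cq in Hs2 Js1.
have Os : odd s.
  have := cnt_par Hs Hst (ltnW Hp); rewrite -/s.
  move: Sgj; rewrite (single_iff Hs Hst Hp) => /andP [/negbTE -> _].
  by rewrite addbF /p /= odd_double.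
apply/hasP; exists s.
  rewrite /Xof mem_filter mem_iota add0n Hs1 Os Hs2 Js /=.
  by rewrite andbT.
rewrite /in_block Js Js1 /p /q; lia.
Qed.

Lemma main2 m a b : Ctx m a b ->
  exists X : seq nat,
    all (fun s => odd s && (s.+1 < size (Jseq a))) X /\ b = aX a X.
Proof.
move=> H; have [Ha Hb Hs Hst _] := H.
exists (Xof a b); split.
  by apply/allP => s; rewrite /Xof mem_filter => /andP [/andP [-> _] _].
apply: (@eq_from_nth _ 0); first by rewrite /aX size_map size_iota Hb Ha.
move=> i; rewrite Hb -Ha => Hi.
rewrite /aX /= (nth_map 0) ?size_iota // nth_iota // add0n.
case: ifP => Hhas.
  set s := nth 0 (Xof a b) (find _ _).
  have Hsx : s \in Xof a b by apply: mem_nth; rewrite -has_find.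
  have Hin : in_block (Jseq a) i s by apply: nth_find.
  move: Hsx; rewrite /Xof mem_filter => /andP [/andP [/andP [Os Ss] Sw] _].
  exact: (in_block_val H Ss Os Sw Hin).
by apply: (outside H Hi); rewrite Hhas.
Qed.


Theorem lemma1p2 (N : nat) (a b : seq nat) :
  ~~ odd N ->
  size a = N.+1 -> sorted leq a -> step2_incr a ->
  (* b \in E *)
  size b = N.+1 -> step2_incr b -> perm_eq b a ->
  (* multisets of hats coincide *)
  perm_eq (hat b) (hat a) ->
  exists X : seq nat,
    all (fun s => odd s && (s.+1 < size (Jseq a))) X /\ b = aX a X.
Proof.
move=> HN Ha Hs Hst Hb Hbst Hp Hh.
have EN : N = (N./2).*2 by rewrite even_halfK.
rewrite EN in Ha Hb.
have [H0 Hpr] := @pairs (N./2) a b Ha Hb Hs Hbst Hp Hh.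
by apply: (@main2 N./2); split.
Qed.
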